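(* Suppose $Z_{0,N} \in \mathcal{H}_N$. Let assumptions (A5)–(A7) below hold and let $\Pi_N(t)$ be the solution of the approximate Riccati equation $$\Pi_{N}(t) = S^{\star}_N(t_f-t) Q_{f,N} S_N(t_f-t) + \int_t^{t_f} S^{\star}_N(\tau-t) \left( Q_N(\tau) - \Pi_{N}(\tau) \bar{B}_N \bar{B}_N^{\star}(\tau) \Pi_{N}(\tau) \right) S_N(\tau-t)\, \mathrm{d} \tau .$$ Assume the approximated input operator is continuous with respect to location, i.e. there exists a continuous function $l_N: \mathbb{R}^+ \rightarrow \mathbb{R}^+$ with $l_N(0) = 0$ and $\| B_{i,N}(x,t) - B_{i,N}(y,t)\|_{L^2(\Omega)} \leq l_N(|x-y|_2)$ for all $t \in [0,t_f]$, all $x,y \in \mathbb{R}^2$, and all $i \in \{1,\dots,m_a\}$. Then the mapping $K_N: C([0,t_f];\mathbb{R}^n) \rightarrow \mathbb{R}^+$ defined by $K_N(\xi) := \langle Z_{0,N}, \Pi_{N}(0) Z_{0,N} \rangle$ (with $\Pi_N$ computed using $B_N(M\xi(\cdot),\cdot)$ along the actuator trajectory $\xi$) is continuous.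
   Context: Let $\Omega=[0,1]\times[0,1]$, $\mathcal{H} := L^2(\Omega)$, and let $\mathcal{A}$ generate a strongly continuous semigroup $\mathcal{S}(t)$ on $\mathcal{H}$. The PDE system is $\dot{\mathcal{Z}} = \mathcal{A}\mathcal{Z} + \mathcal{B}(M\xi(t),t)u(t)$, $u(t)\in U\subseteq\mathbb{R}^{m_a}$, where $m_a$ actuators obey $\dot\xi = \alpha\xi + \beta p$, $\xi(t)\in\mathbb{R}^n$, $M\xi(t)$ gives actuator locations, and $\mathcal{B}(M\xi(t),t) = [\mathcal{B}_1,\dots,\mathcal{B}_{m_a}]^\top\in\mathcal{L}(U,\mathcal{H})$. $R$ is symmetric positive definite, $\bar{\mathcal{B}}\bar{\mathcal{B}}^{\star}(t) := \mathcal{B}(t)R^{-1}\mathcal{B}^{\star}(t)$, and $\mathcal{Q}(t),\mathcal{Q}_f$ are self-adjoint nonnegative. $\mathcal{H}_N\subset\mathcal{H}$ is a finite-dimensional subspace with inherited inner product and norm, $P_N$ the orthogonal projection onto $\mathcal{H}_N$, $S_N(t) := P_N\mathcal{S}(t)P_N$, $Z_{0,N} := P_N\mathcal{Z}_0$, $A_N\in\mathcal{L}(\mathcal{H}_N)$ and $B_N(M\xi(t),t) = [B_{1,N},\dots,B_{m_a,N}]^\top \in\mathcal{L}(U,\mathcal{H}_N)$ are approximations of $\mathcal{A}$ and $\mathcal{B}$, $Q_N = P_N\mathcal{Q}P_N$, $Q_{f,N} = P_N\mathcal{Q}_fP_N$, and $\bar B_N\bar B_N^{\star}(t) := B_N(t)R^{-1}B_N^{\star}(t)$.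 For $1\le q<\infty$, $\mathcal{J}_q(\mathcal{H})$ denotes the Schatten class of bounded operators $A$ with $\mathrm{tr}((\sqrt{A^{\star}A})^q)<\infty$. Assumptions: (A5) $\mathcal{Q}_f$ and $Q_{f,N}$ lie in $\mathcal{J}_q(\mathcal{H})$, are nonnegative, and $\|\mathcal{Q}_f - Q_{f,N}\|_{\mathcal{J}_q(\mathcal{H})}\to0$; (A6) $\mathcal{Q}(\cdot)$ and $Q_N(\cdot)$ lie in $L^1([0,t_f];\mathcal{J}_q(\mathcal{H}))$, are nonnegative, and $\int_0^t\|\mathcal{Q}(\tau)-Q_N(\tau)\|_{\mathcal{J}_q(\mathcal{H})}\mathrm{d}\tau\to0$ for all $t\in[0,t_f]$; (A7) $\bar{\mathcal{B}}\bar{\mathcal{B}}^{\star}(\cdot)$ and $\bar B_N\bar B_N^{\star}(\cdot)$ lie in $L^\infty([0,t_f];\mathcal{L}(\mathcal{H}))$, are nonnegative, and $\operatorname{ess\,sup}_{t\in[0,t_f]}\|\bar{\mathcal{B}}\bar{\mathcal{B}}^{\star}(t) - \bar B_N\bar B_N^{\star}(t)\|_{\mathrm{op}}\to0$ as $N\to\infty$. *)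

(* Defs.v *)
From HB Require Import structures.
From mathcomp Require Import all_boot all_order all_algebra.
From mathcomp Require Import all_classical all_reals all_analysis.
Set Implicit Arguments. Unset Strict Implicit. Unset Printing Implicit Defensive.
Import Order.TTheory GRing.Theory Num.Theory.
Import numFieldNormedType.Exports.
Local Open Scope classical_set_scope.
Local Open Scope ring_scope.

Section Defs.
Context {R : realType}.

Definition mx_integral (m k : nat) (a b : R) (F : R -> 'M[R]_(m, k)) : 'M[R]_(m, k) :=
  \matrix_(i, j) Rintegral (@lebesgue_measure R) `[a, b] (fun tau => F tau i j).

(* self-adjoint nonnegative operator on H_N = R^d (orthonormal coordinates) *)
Definition sym_nonneg (d : nat) (A : 'M[R]_d) : Prop :=
  A^T = A /\ forall v : 'cV[R]_d, 0 <= (v^T *m A *m v) 0 0.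

Definition sym_posdef (m : nat) (A : 'M[R]_m) : Prop :=
  A^T = A /\ forall u : 'cV[R]_m, u != 0 -> 0 < (u^T *m A *m u) 0 0.

(* Euclidean norm |.|_2 (also the L^2(Omega) norm of H_N in orthonormal coordinates) *)
Definition eucl (k : nat) (v : 'cV[R]_k) : R := Num.sqrt (\sum_i (v i 0) ^+ 2).

(* B_N(M xi(t), t) : R^{m_a} -> H_N, column i = B_{i,N}(location of actuator i, t);
   the location of actuator i is M i *m xi(t) in R^2. *)
Definition BN_along (d n ma : nat) (B : 'I_ma -> 'cV[R]_2 -> R -> 'cV[R]_d)
  (M : 'I_ma -> 'M[R]_(2, n)) (xi : R -> 'cV[R]_n) (t : R) : 'M[R]_(d, ma) :=
  \matrix_(k, i) B i (M i *m xi t) t k 0.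

(* \bar B_N \bar B_N^*(t) = B_N(t) R^{-1} B_N^*(t) *)
Definition BBstar_along (d n ma : nat) (Rw : 'M[R]_ma)
  (B : 'I_ma -> 'cV[R]_2 -> R -> 'cV[R]_d) (M : 'I_ma -> 'M[R]_(2, n))
  (xi : R -> 'cV[R]_n) (t : R) : 'M[R]_d :=
  BN_along B M xi t *m invmx Rw *m (BN_along B M xi t)^T.

Definition riccati_solution (d : nat) (tf : R) (S : R -> 'M[R]_d) (Qf : 'M[R]_d)
  (Q : R -> 'M[R]_d) (BB : R -> 'M[R]_d) (Pi : R -> 'M[R]_d) : Prop :=
  {within `[0, tf], continuous Pi} /\
  forall t, 0 <= t <= tf ->
    Pi t = (S (tf - t))^T *m Qf *m S (tf - t)
         + mx_integral t tf
             (fun tau => (S (tau - t))^T *m (Q tau - Pi tau *m BB tau *m Pi tau)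
                         *m S (tau - t)).

Definition Linf_nonneg_on (d : nat) (tf : R) (BB : R -> 'M[R]_d) : Prop :=
  (forall i j, measurable_fun `[0, tf] (fun tau => BB tau i j)) /\
  (exists C : R, {ae (@lebesgue_measure R), forall tau, 0 <= tau <= tf -> `|BB tau| <= C}) /\
  {ae (@lebesgue_measure R), forall tau, 0 <= tau <= tf -> sym_nonneg (BB tau)}.

Definition L1_nonneg_on (d : nat) (tf : R) (Q : R -> 'M[R]_d) : Prop :=
  (forall i j, (@lebesgue_measure R).-integrable `[0, tf] (EFin \o (fun tau => Q tau i j))) /\
  {ae (@lebesgue_measure R), forall tau, 0 <= tau <= tf -> sym_nonneg (Q tau)}.

Definition K_N (d n : nat) (Pi : (R -> 'cV[R]_n) -> R -> 'M[R]_d) (z0 : 'cV[R]_d)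
  (xi : R -> 'cV[R]_n) : R := (z0^T *m Pi xi 0 *m z0) 0 0.

End Defs.

(* Main.v *)
Require Import Defs.
From HB Require Import structures.
From mathcomp Require Import all_boot all_order all_algebra.
From mathcomp Require Import all_classical all_reals all_analysis.
From mathcomp Require Import ring lra measurable_realfun.
Import Order.TTheory GRing.Theory Num.Theory.
Import numFieldNormedType.Exports.
Local Open Scope classical_set_scope.
Local Open Scope ring_scope.
Set Implicit Arguments. Unset Strict Implicit. Unset Printing Implicit Defensive.

Section S.
Context {R : realType}.
Definition nm (m n : nat) (A : 'M[R]_(m, n)) : R := \sum_i \sum_j `|A i j|.

Lemma nm_ge0 m n (A : 'M[R]_(m, n)) : 0 <= nm A.
Proof. by apply: sumr_ge0 => i _; apply: sumr_ge0 => j _. Qed.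

Lemma row_le_nm m n (A : 'M[R]_(m, n)) i : \sum_j `|A i j| <= nm A.
Proof.
rewrite /nm (bigD1 i) //= lerDl; apply: sumr_ge0 => k _; exact: sumr_ge0.
Qed.

Lemma entry_le_nm m n (A : 'M[R]_(m, n)) i j : `|A i j| <= nm A.
Proof.
apply: le_trans (row_le_nm A i); rewrite (bigD1 j) //= lerDl; exact: sumr_ge0.
Qed.

Lemma nmD m n (A B : 'M[R]_(m, n)) : nm (A + B) <= nm A + nm B.
Proof.
rewrite /nm -big_split /=; apply: ler_sum => i _; rewrite -big_split /=.
by apply: ler_sum => j _; rewrite mxE ler_normD.
Qed.

Lemma nmN m n (A : 'M[R]_(m, n)) : nm (- A) = nm A.
Proof. by apply: eq_bigr => i _; apply: eq_bigr => j _; rewrite mxE normrN. Qed.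

Lemma nmB m n (A B : 'M[R]_(m, n)) : nm (A - B) <= nm A + nm B.
Proof. by rewrite -(nmN B) nmD. Qed.

Lemma nm_tr m n (A : 'M[R]_(m, n)) : nm A^T = nm A.
Proof.
rewrite /nm exchange_big; apply: eq_bigr => i _; apply: eq_bigr => j _.
by rewrite mxE.
Qed.

Lemma nmM m n p (A : 'M[R]_(m, n)) (B : 'M[R]_(n, p)) : nm (A *m B) <= nm A * nm B.
Proof.
rewrite /nm mulr_suml; apply: ler_sum => i _.
rewrite mulr_suml.
apply: (@le_trans _ _ (\sum_k \sum_j `|A i j| * `|B j k|)).
  apply: ler_sum => k _; rewrite mxE; apply: le_trans (ler_norm_sum _ _ _) _.
  by apply: ler_sum => j _; rewrite normrM.
rewrite exchange_big /=; apply: ler_sum => j _.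
rewrite -mulr_sumr; apply: ler_wpM2l => //.
exact: row_le_nm.
Qed.

Lemma entry_le_mxnorm m n (A : 'M[R]_(m, n)) i j : `|A i j| <= `|A|.
Proof.
rewrite [X in _ <= X]mx_normrE.
exact: (le_bigmax 0 (fun ij : 'I_m * 'I_n => `|A ij.1 ij.2|) (i, j)).
Qed.

Lemma nm_le_mxnorm m n (A : 'M[R]_(m, n)) : nm A <= `|A| *+ (m * n).
Proof.
apply: (@le_trans _ _ (\sum_(i < m) \sum_(j < n) `|A|)).
  by apply: ler_sum => i _; apply: ler_sum => j _; exact: entry_le_mxnorm.
by rewrite sumr_const card_ord sumr_const card_ord -mulrnA mulnC.
Qed.
End S.

Section S.
Context {R : realType}.
Notation mu := (@lebesgue_measure R).

Lemma aeF : Filter (nbhs (almost_everywhere mu)).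
Proof. exact: ae_filter_ringOfSetsType. Qed.

Lemma wcont_ed (V : normedModType R) (A : set R) (f : R -> V) :
  {within A, continuous f} -> forall x, A x -> forall e, 0 < e ->
  exists2 d, 0 < d & forall y, A y -> `|x - y| < d -> `|f x - f y| < e.
Proof.
move=> /subspace_continuousP fc x Ax e e0.
have := fc x Ax; move/cvgrPdist_lt/(_ e e0); rewrite near_withinE.
case/nbhs_ballP => d d0 H; exists d => // y Ay xy.
by apply: H => //; rewrite -ball_normE.
Qed.

Lemma ed_wcont (V : normedModType R) (A : set R) (f : R -> V) :
  (forall x, A x -> forall e, 0 < e ->
  exists2 d, 0 < d & forall y, A y -> `|x - y| < d -> `|f x - f y| < e) ->
  {within A, continuous f}.
Proof.
move=> H; apply/subspace_continuousP => x Ax; apply/cvgrPdist_lt => e e0.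
rewrite near_withinE; apply/nbhs_ballP.
have [d d0 Hd] := H x Ax e e0; exists d => // y; rewrite -ball_normE /= => xy Ay.
exact: Hd.
Qed.

Lemma wcont_entry m n (A : set R) (F : R -> 'M[R]_(m, n)) i j :
  {within A, continuous F} -> {within A, continuous (fun t => F t i j)}.
Proof.
move=> /wcont_ed H; apply: ed_wcont => x Ax e e0.
have [d d0 Hd] := H x Ax e e0; exists d => // y Ay xy.
apply: le_lt_trans (Hd y Ay xy).
by have := entry_le_mxnorm (F x - F y) i j; rewrite !mxE.
Qed.

Lemma nm_dist m n (X Y : 'M[R]_(m, n)) : `|nm X - nm Y| <= nm (X - Y).
Proof.
have h1 : nm X <= nm (X - Y) + nm Y by rewrite -{1}(subrK Y X) nmD.
have h2 : nm Y <= nm (X - Y) + nm X.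
  by rewrite -(nmN (X - Y)) opprB -{1}(subrK X Y) nmD.
rewrite ler_norml; apply/andP; split; lra.
Qed.

Lemma wcont_nm m n (A : set R) (F : R -> 'M[R]_(m, n)) :
  {within A, continuous F} -> {within A, continuous (fun t => nm (F t))}.
Proof.
move=> /wcont_ed H; apply: ed_wcont => x Ax e e0.
have k0 : 0 < (m * n)%:R + 1 :> R by rewrite ltr_pwDr // ler0n.
have [d d0 Hd] := H x Ax (e / ((m * n)%:R + 1)) (divr_gt0 e0 k0).
exists d => // y Ay xy; apply: le_lt_trans (nm_dist _ _) _.
apply: le_lt_trans (nm_le_mxnorm _) _.
have := Hd y Ay xy; rewrite ltr_pdivlMr // => h.
apply: le_lt_trans h; rewrite -[X in X <= _]mulr_natr; apply: ler_wpM2l => //.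
by rewrite lerDl.
Qed.

Lemma wcont_bound (a b : R) (f : R -> R) : a <= b ->
  {within `[a, b], continuous f} -> exists P, forall t, a <= t <= b -> f t <= P.
Proof.
move=> ab cf; have [c _ Hc] := EVT_max ab cf.
by exists (f c) => t tab; apply: Hc; rewrite in_itv /= tab.
Qed.

Lemma cont_meas (a b : R) (f : R -> R) :
  {within `[a, b], continuous f} -> measurable_fun `[a, b] f.
Proof.
by move=> cf; apply: subspace_continuous_measurable_fun => //; exact: measurable_itv.
Qed.

Lemma cont_integrable (a b : R) (f : R -> R) :
  {within `[a, b], continuous f} -> mu.-integrable `[a, b] (EFin \o f).
Proof.
by move=> cf; apply: continuous_compact_integrable => //; exact: segment_compact.
Qed.

Lemma ae_bdd_integrable (D : set R) (f : R -> R) (C : R) :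
  measurable D -> (mu D < +oo)%E -> measurable_fun D f -> 0 <= C ->
  {ae mu, forall x, D x -> `|f x| <= C} -> mu.-integrable D (EFin \o f).
Proof.
move=> mD Dfin mf C0 Hae; apply/integrableP; split; first exact/measurable_EFinP.
apply: (@le_lt_trans _ _ (\int[mu]_(x in D) (cst C%:E) x)%E).
  apply: ae_ge0_le_integral.
  - exact: mD.
  - by move=> x _; exact: abse_ge0.
  - apply: measurableT_comp => //; exact/measurable_EFinP.
  - by move=> x _; rewrite /= lee_fin.
  - exact: measurable_cst.
  - move: Hae; apply: (filterS (Filter := aeF)) => x H Dx /=; rewrite lee_fin; exact: H.
rewrite integral_cst //.
by apply: lte_mul_pinfty => //; rewrite lee_fin.
Qed.

Lemma ae_Rint_bound (D : set R) (h k : R -> R) :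
  measurable D -> mu.-integrable D (EFin \o h) -> mu.-integrable D (EFin \o k) ->
  (forall x, D x -> 0 <= k x) ->
  {ae mu, forall x, D x -> `|h x| <= k x} ->
  `|\int[mu]_(x in D) h x| <= \int[mu]_(x in D) k x.
Proof.
move=> mD ih ik k0 Hae.
have H1 := @le_normr_Rintegral _ _ _ mu D h mD ih.
apply: le_trans H1 _.
have iah := integrable_norm ih.
rewrite /Rintegral; apply: fine_le.
- exact: integrable_fin_num.
- exact: integrable_fin_num.
apply: ae_ge0_le_integral.
- exact: mD.
- by move=> x _; rewrite /= lee_fin.
- by case/integrableP: iah => ? _.
- by move=> x Dx; rewrite /= lee_fin k0.
- by case/integrableP: ik => ? _.
- by move: Hae; apply: (filterS (Filter := aeF)) => x H Dx /=; rewrite lee_fin; exact: H.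
Qed.

Lemma integrable_rMl (D : set R) (q h : R -> R) (C : R) :
  measurable D -> mu.-integrable D (EFin \o q) -> measurable_fun D h ->
  (forall x, D x -> `|h x| <= C) ->
  mu.-integrable D (EFin \o (fun x => q x * h x)).
Proof.
move=> mD iq mh hC.
have := @integrableMl _ _ _ mu D mD _ _ iq mh.
have bh : [bounded h x | x in D].
  exists C; split; first exact: num_real.
  by move=> y Cy x Dx; apply: le_trans (hC x Dx) (ltW Cy).
move=> /(_ bh); apply: (@eq_integrable _ _ _ mu D mD) => x _ /=; by rewrite EFinM.
Qed.

Lemma integrable_rsum (D : set R) (I : finType) (f : I -> R -> R) :
  measurable D -> (forall i, mu.-integrable D (EFin \o f i)) ->
  mu.-integrable D (EFin \o (fun x => \sum_i f i x)).
Proof.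
move=> mD H; have := @integrable_sum _ _ _ mu D mD _ (index_enum I) predT (fun i x => (f i x)%:E).
move=> /(_ (fun i _ => H i)); apply: (@eq_integrable _ _ _ mu D mD) => x _ /=.
by rewrite sumEFin.
Qed.

End S.

Section S.
Context {R : realType}.
Notation mu := (@lebesgue_measure R).

Definition mxm (D : set R) m n (F : R -> 'M[R]_(m, n)) :=
  forall i j, measurable_fun D (fun t => F t i j).

Lemma mxm_mul (D : set R) m n p (F : R -> 'M[R]_(m, n)) (G : R -> 'M[R]_(n, p)) :
  mxm D F -> mxm D G -> mxm D (fun t => F t *m G t).
Proof.
move=> hF hG i j.
rewrite (_ : (fun t => _) = fun t => \sum_k F t i k * G t k j); last first.
  by apply/funext => t; rewrite mxE.
apply: measurable_sum => k; exact: measurable_funM.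
Qed.

Lemma mxm_B (D : set R) m n (F G : R -> 'M[R]_(m, n)) :
  mxm D F -> mxm D G -> mxm D (fun t => F t - G t).
Proof.
move=> hF hG i j.
rewrite (_ : (fun t => _) = fun t => F t i j - G t i j); last first.
  by apply/funext => t; rewrite !mxE.
exact: measurable_funB.
Qed.

Lemma mxm_tr (D : set R) m n (F : R -> 'M[R]_(m, n)) :
  mxm D F -> mxm D (fun t => (F t)^T).
Proof.
move=> hF i j.
rewrite (_ : (fun t => _) = fun t => F t j i); last first.
  by apply/funext => t; rewrite !mxE.
exact: hF.
Qed.

Lemma mxm_cont (a b : R) m n (F : R -> 'M[R]_(m, n)) :
  {within `[a, b], continuous F} -> mxm `[a, b] F.
Proof. by move=> cF i j; apply: cont_meas; exact: wcont_entry. Qed.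

Lemma mxm_sub (a b c e : R) m n (F : R -> 'M[R]_(m, n)) :
  a <= c -> e <= b -> mxm `[a, b] F -> mxm `[c, e] F.
Proof.
move=> ac eb hF i j; apply: (measurable_funS (measurable_itv _) _ (hF i j)).
move=> x /=; rewrite !in_itv /= => /andP[cx xe]; apply/andP; split; lra.
Qed.

Lemma diff_ident d (S' Q Px Pe Bx Be : 'M[R]_d) :
  S'^T *m (Q - Px *m Bx *m Px) *m S' - S'^T *m (Q - Pe *m Be *m Pe) *m S'
  = S'^T *m (Pe *m Be *m Pe - Px *m Bx *m Px) *m S'.
Proof.
rewrite -mulmxBl -mulmxBr; congr (_ *m _ *m _).
by rewrite opprB addrC addrA subrK.
Qed.

Lemma zmod4 (V : zmodType) (a b c e : V) : a - e = (a - b) + ((b - c) + (c - e)).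
Proof. by rewrite [X in _ = _ + X]addrA subrK addrA subrK. Qed.

Lemma quad_ident d (Px Pe Bx Be : 'M[R]_d) :
  Pe *m Be *m Pe - Px *m Bx *m Px =
  Pe *m (Be - Bx) *m Pe + ((Pe - Px) *m Bx *m Pe + Px *m Bx *m (Pe - Px)).
Proof.
rewrite !(mulmxBl, mulmxBr); exact: zmod4.
Qed.

Lemma nmM3 m n p q (A : 'M[R]_(m, n)) (B : 'M[R]_(n, p)) (C : 'M[R]_(p, q)) :
  nm (A *m B *m C) <= nm A * nm B * nm C.
Proof.
apply: le_trans (nmM _ _) _; apply: ler_wpM2r; [exact: nm_ge0 | exact: nmM].
Qed.

Lemma pw_bound d (S' Q Px Pe Bx Be : 'M[R]_d) :
  nm (S'^T *m (Q - Px *m Bx *m Px) *m S' - S'^T *m (Q - Pe *m Be *m Pe) *m S')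
  <= nm S' * nm S' * (nm Pe * nm Pe * nm (Be - Bx) + nm (Pe - Px) * nm Bx * (nm Pe + nm Px)).
Proof.
rewrite diff_ident quad_ident.
set X := (X in S'^T *m X *m S').
apply: le_trans (nmM3 _ _ _) _; rewrite nm_tr mulrAC; apply: ler_wpM2l.
  by apply: mulr_ge0; exact: nm_ge0.
apply: le_trans (nmD _ _) _.
have e : nm (Pe - Px) * nm Bx * (nm Pe + nm Px) =
   nm (Pe - Px) * nm Bx * nm Pe + nm Px * nm Bx * nm (Pe - Px) by ring.
rewrite e [nm Pe * nm Pe * _]mulrAC; apply: lerD; first exact: nmM3.
by apply: le_trans (nmD _ _) _; apply: lerD; exact: nmM3.
Qed.

End S.

Section S.
Context {R : realType}.

Definition ED (a b : R) (f : R -> R) := forall x, a <= x <= b -> forall e, 0 < e ->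
  exists2 d, 0 < d & forall y, a <= y <= b -> `|x - y| < d -> `|f x - f y| < e.

Definition HypB (f : R -> R) (tf A beta : R) := forall s u m M,
  0 <= s -> s <= u -> u <= tf -> 0 <= m -> m <= M -> M <= 1 ->
  (forall x, s <= x <= tf -> f x <= M) -> (forall x, u <= x <= tf -> f x <= m) ->
  forall t, s <= t <= tf -> f t <= A + beta * ((u - s) * M + tf * m).

Lemma step_lemma (f : R -> R) (tf A beta h s u c : R) :
  0 < A -> 0 <= beta -> 0 <= tf -> beta * h <= 1/4 ->
  ED 0 tf f -> HypB f tf A beta ->
  0 <= s -> s <= u -> u <= tf -> u - s <= h -> 0 <= c ->
  2 * A + 2 * (beta * tf + 1) * c <= 1 ->
  (forall x, u <= x <= tf -> f x <= c) ->
  forall x, s <= x <= tf -> f x <= 2 * A + 2 * (beta * tf + 1) * c.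
Proof.
move=> A0 b0 tf0 bh cf HB s0 su utf ush c0 c'1 Hc.
set c' := 2 * A + 2 * (beta * tf + 1) * c.
have cc' : c < c'.
  rewrite /c'; have : 0 <= beta * tf * c by rewrite mulr_ge0 // mulr_ge0.
  nra.
move=> x /andP[sx xtf]; rewrite leNgt; apply/negP => fx.
have xu : x < u.
  rewrite ltNge; apply/negP => ux.
  have := Hc x; rewrite ux xtf => /(_ isT) H; lra.
pose T := [set t | s <= t <= u /\ c' < f t].
have Tx : T x by split => //; rewrite sx (ltW xu).
have hsT : has_sup T.
  split; first by exists x.
  by exists u => t [/andP[_ ->]].
set ts := sup T.
have ubT := sup_upper_bound hsT.
have xts : x <= ts by exact: ubT.
have tsu : ts <= u by apply: ge_sup; [exists x | move=> t [/andP[_ ->]]].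
have sts : s <= ts by apply: le_trans xts.
have ts0 : 0 <= ts by apply: le_trans sts.
have tstf : ts <= tf by apply: le_trans utf.
have C1 : forall y, ts < y -> y <= tf -> f y <= c'.
  move=> y tsy ytf; have [uy|yu] := leP u y.
    have := Hc y; rewrite uy ytf => /(_ isT) H; exact: le_trans H (ltW cc').
  rewrite leNgt; apply/negP => fy.
  have Ty : T y by split => //; rewrite (ltW yu) andbT; apply: le_trans (ltW tsy).
  have := ubT y Ty; rewrite leNgt tsy //.
have C2 : f ts <= c'.
  rewrite leNgt; apply/negP => fts.
  have [tsu'|tsu'] := ltP ts u; last first.
    have tsE : ts = u by apply/eqP; rewrite eq_le tsu tsu'.
    move: fts; rewrite tsE => fts.
    have := Hc u; rewrite lexx utf => /(_ isT) H; lra.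
  have fpos : 0 < f ts - c' by rewrite subr_gt0.
  have [d d0 Hd] := cf ts (ltac:(by rewrite ts0 tstf)) _ fpos.
  pose y := Num.min (ts + d / 2) u.
  have tsy : ts < y by rewrite /y lt_min tsu' andbT ltrDl divr_gt0.
  have yu : y <= u by rewrite /y ge_min lexx orbT.
  have dy : `|ts - y| < d.
    rewrite distrC gtr0_norm ?subr_gt0 //.
    have : y <= ts + d / 2 by rewrite /y ge_min lexx.
    lra.
  have := Hd y (ltac:(by rewrite (le_trans ts0 (ltW tsy)) (le_trans yu utf))) dy.
  rewrite ltr_norml => /andP[h1 h2].
  have := C1 y tsy (le_trans yu utf); lra.
have Cts : forall y, ts <= y <= tf -> f y <= c'.
  move=> y /andP[tsy ytf]; have [tsy'|tsy'] := ltP ts y; first exact: C1.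
  by have -> : y = ts by apply/eqP; rewrite eq_le tsy' tsy.
have HBts := HB ts u c c' ts0 tsu utf c0 (ltW cc') c'1 Cts Hc ts.
rewrite lexx tstf in HBts; have {}HBts := HBts isT.
have k1 : beta * (u - ts) <= 1/4.
  apply: le_trans bh; apply: ler_wpM2l => //; lra.
have c'0 : 0 <= c' by lra.
have k2 : beta * (u - ts) * c' <= c' / 4.
  have := ler_wpM2r c'0 k1; lra.
have v_lt : A + beta * ((u - ts) * c' + tf * c) < c'.
  have e1 : beta * ((u - ts) * c' + tf * c) = beta * (u - ts) * c' + beta * tf * c.
    by rewrite mulrDr !mulrA.
  rewrite e1 /c'.
  have : 0 <= beta * tf * c by rewrite mulr_ge0 // mulr_ge0.
  move: k2; rewrite /c'; nra.
have fpos : 0 < c' - f ts by rewrite subr_gt0; exact: le_lt_trans HBts v_lt.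
have [d d0 Hd] := cf ts (ltac:(by rewrite ts0 tstf)) _ fpos.
have [t1 Tt1 t1d] := sup_adherent d0 hsT.
have t1ts : t1 <= ts := ubT t1 Tt1.
case: Tt1 => /andP[st1 t1u] ct1.
have dt1 : `|ts - t1| < d by rewrite ger0_norm ?subr_ge0 //; rewrite -/ts in t1d; lra.
have := Hd t1 (ltac:(by rewrite (le_trans s0 st1) (le_trans t1u utf))) dt1.
rewrite ltr_norml => /andP[h1 h2]; lra.
Qed.

Fixpoint gs (c : R) (j : nat) : R := if j is j'.+1 then 2 * (1 + c * gs c j') else 0.

Lemma gs_ge0 c j : 0 <= c -> 0 <= gs c j.
Proof.
move=> c0; elim: j => [|j IH] /=; first by [].
by apply: mulr_ge0 => //; apply: addr_ge0 => //; apply: mulr_ge0.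
Qed.

Lemma gs_le c i j : 1 <= c -> (i <= j)%N -> gs c i <= gs c j.
Proof.
move=> c1; elim: j => [|j IH]; first by rewrite leqn0 => /eqP ->.
rewrite leq_eqVlt => /orP[/eqP -> //|]; rewrite ltnS => /IH H.
apply: le_trans H _ => /=.
have g0 := gs_ge0 j (le_trans ler01 c1).
have : gs c j <= c * gs c j by rewrite ler_peMl.
lra.
Qed.

Lemma bootstrap (f : R -> R) (tf A beta : R) (K : nat) :
  0 < tf -> 0 < A -> 0 <= beta -> (0 < K)%N -> beta * (tf / K%:R) <= 1/4 ->
  ED 0 tf f -> f tf <= 0 -> HypB f tf A beta ->
  A * gs (beta * tf + 1) K <= 1 ->
  forall t, 0 <= t <= tf -> f t <= A * gs (beta * tf + 1) K.
Proof.
move=> tf0 A0 b0 K0 bh cf ftf HB AK.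
set h := tf / K%:R; set c := beta * tf + 1.
have c1 : 1 <= c by rewrite /c lerDr mulr_ge0 // ltW.
have h0 : 0 <= h by rewrite /h divr_ge0 // ltW.
pose u (j : nat) := Num.max (tf - j%:R * h) 0.
have u0 : forall j, 0 <= u j by move=> j; rewrite /u le_max lexx orbT.
have utf : forall j, u j <= tf.
  move=> j; rewrite /u ge_max (ltW tf0) andbT.
  have : 0 <= j%:R * h by rewrite mulr_ge0.
  lra.
have uS : forall j, u j.+1 <= u j.
  move=> j; rewrite /u ge_max; apply/andP; split; last by rewrite le_max lexx orbT.
  rewrite le_max; apply/orP; left.
  rewrite -addn1 natrD mulrDl mul1r; lra.
have uh : forall j, u j - u j.+1 <= h.
  move=> j; have : u j <= u j.+1 + h.
    rewrite /u ge_max; apply/andP; split; last first.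
      have : 0 <= Num.max (tf - j.+1%:R * h) 0 by rewrite le_max lexx orbT.
      lra.
    have : tf - j.+1%:R * h <= Num.max (tf - j.+1%:R * h) 0 by rewrite le_max lexx.
    rewrite -addn1 natrD mulrDl mul1r; lra.
  lra.
have claim : forall j, (j <= K)%N -> forall x, u j <= x <= tf -> f x <= A * gs c j.
  elim=> [|j IH] jK x.
    rewrite /u /= mul0r subr0 => /andP[]; rewrite ge_max => /andP[tfx _] xtf.
    have -> : x = tf by apply/eqP; rewrite eq_le xtf tfx.
    by rewrite mulr0.
  have jK' : (j <= K)%N by apply: leq_trans jK.
  have gsK : A * gs c j.+1 <= 1.
    apply: le_trans AK; apply: ler_wpM2l; [exact: ltW | exact: gs_le].
  have e : A * gs c j.+1 = 2 * A + 2 * (beta * tf + 1) * (A * gs c j).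
    by rewrite /= /c; ring.
  rewrite e => Hx; apply: (step_lemma (h := h) A0 b0 (ltW tf0) bh cf HB (u0 j.+1) (uS j) (utf j) (uh j)) => //.
  - by apply: mulr_ge0; [exact: ltW | apply: gs_ge0; lra].
  - by rewrite -e.
  - exact: IH.
move=> t /andP[t0 ttf]; apply: (claim K (leqnn K)).
rewrite ttf andbT /u ge_max t0 andbT.
rewrite /h mulrC divfK ?subrr //.
by rewrite pnatr_eq0 -lt0n.
Qed.
End S.

Section S.
Context {R : realType}.

Definition qf m (W : 'M[R]_m) (a b : 'rV[R]_m) : R := (a *m W *m b^T) 0 0.

Lemma posdef_ge0 m (A : 'M[R]_m) : sym_posdef A -> forall u : 'cV[R]_m, 0 <= (u^T *m A *m u) 0 0.
Proof.
case=> _ H u; have [->|u0] := eqVneq u 0; last exact: ltW (H u u0).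
by rewrite mulmx0 mxE.
Qed.

Lemma Wsym m (Rw : 'M[R]_m) : sym_posdef Rw -> (invmx Rw)^T = invmx Rw.
Proof. by case=> s _; rewrite trmx_inv s. Qed.

Lemma Wpsd m (Rw : 'M[R]_m) : sym_posdef Rw -> forall v, 0 <= qf (invmx Rw) v v.
Proof.
move=> hR v; have hs := Wsym hR; case: (hR) => s _.
rewrite /qf; case U : (Rw \in unitmx); last first.
  rewrite /invmx U; have := posdef_ge0 hR v^T; by rewrite trmxK.
pose y := invmx Rw *m v^T.
have := posdef_ge0 hR y.
rewrite /y trmx_mul trmxK hs -!mulmxA (mulmxA Rw) mulmxV // mul1mx.
by rewrite !mulmxA.
Qed.

Lemma qf_sym m (W : 'M[R]_m) a b : W^T = W -> qf W b a = qf W a b.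
Proof.
move=> hs; rewrite /qf.
have -> : (b *m W *m a^T) 0 0 = ((b *m W *m a^T)^T) 0 0 by rewrite [in RHS]mxE.
by rewrite !trmx_mul trmxK hs mulmxA.
Qed.

Lemma qf_expand m (W : 'M[R]_m) a b (c : R) : W^T = W ->
  qf W (a + c *: b) (a + c *: b) = qf W a a + 2 * c * qf W a b + c ^+ 2 * qf W b b.
Proof.
move=> hs; rewrite /qf linearD linearZ /= !(mulmxDl, mulmxDr).
rewrite -!scalemxAl -!scalemxAr.
have := qf_sym a b hs; rewrite /qf => e.
move: e; move: (a *m W *m a^T) (b *m W *m a^T) (a *m W *m b^T) (b *m W *m b^T) => X1 X2 X3 X4 e.
rewrite !mxE e; ring.
Qed.

Lemma cs_ineq m (W : 'M[R]_m) a b (tau : R) : W^T = W -> (forall v, 0 <= qf W v v) ->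
  0 < tau -> 2 * `|qf W a b| <= qf W a a / tau + tau * qf W b b.
Proof.
move=> hs hp t0.
have h1 := hp (a + tau *: b); rewrite qf_expand // in h1.
have h2 := hp (a + (- tau) *: b); rewrite qf_expand // in h2.
have -> : qf W a a / tau + tau * qf W b b = (qf W a a + tau * (tau * qf W b b)) / tau.
  by field; rewrite gt_eqF.
rewrite ler_pdivlMr //.
have [x0|x0] := leP 0 (qf W a b).
  rewrite ger0_norm //; nra.
rewrite ltr0_norm //; nra.
Qed.

Lemma qf_nm m (W : 'M[R]_m) a b : `|qf W a b| <= nm a * nm W * nm b.
Proof.
rewrite /qf; apply: le_trans (entry_le_nm _ _ _) _.
by apply: le_trans (nmM3 _ _ _) _; rewrite nm_tr.
Qed.

Lemma nm_row m n (A : 'M[R]_(m, n)) k : nm (row k A) <= nm A.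
Proof.
apply: le_trans (row_le_nm A k); rewrite /nm big_ord1.
by under eq_bigr do rewrite mxE.
Qed.

Lemma entry_qf d m (X Y : 'M[R]_(d, m)) W k l :
  (X *m W *m Y^T) k l = qf W (row k X) (row l Y).
Proof.
rewrite /qf -row_mul tr_row !mxE; apply: eq_bigr => j _; rewrite !mxE.
by congr (_ * _); rewrite !mxE.
Qed.

Lemma addmx_entry m n (A B : 'M[R]_(m, n)) i j : (A + B) i j = A i j + B i j.
Proof. by rewrite mxE. Qed.

Lemma zm3 (V : zmodType) (a b c e : V) : (a + b) + (c + e) - a = b + c + e.
Proof. by rewrite addrAC [a + b]addrC addrK addrA. Qed.

Lemma Ebound d m (W : 'M[R]_m) (Bx G : 'M[R]_(d, m)) (C tau g : R) :
  W^T = W -> (forall v, 0 <= qf W v v) -> 0 < tau ->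
  (forall l, qf W (row l Bx) (row l Bx) <= C) -> nm G <= g ->
  nm ((Bx + G) *m W *m (Bx + G)^T - Bx *m W *m Bx^T)
    <= (nm W * g ^+ 2 / tau + tau * C + nm W * g ^+ 2) *+ (d * d).
Proof.
move=> hs hp t0 hC hG.
have g0 : 0 <= g by apply: le_trans (nm_ge0 G) hG.
have eE : (Bx + G) *m W *m (Bx + G)^T - Bx *m W *m Bx^T =
    Bx *m W *m G^T + G *m W *m Bx^T + G *m W *m G^T.
  by rewrite linearD /= !mulmxDl !mulmxDr zm3.
rewrite eE.
set bd := (nm W * g ^+ 2 / tau + tau * C + nm W * g ^+ 2).
apply: (@le_trans _ _ (\sum_(k < d) \sum_(l < d) bd)); last first.
  by rewrite sumr_const sumr_const !card_ord -mulrnA.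
rewrite /nm.
have gk : forall k, nm (row k G) <= g by move=> k; apply: le_trans (nm_row _ _) hG.
have qgg : forall k, qf W (row k G) (row k G) <= nm W * g ^+ 2.
  move=> k; apply: le_trans (ler_norm _) _; apply: le_trans (qf_nm _ _ _) _.
  have := gk k; have := nm_ge0 (row k G); have := nm_ge0 W.
  move=> a b c; rewrite expr2.
  have -> : nm (row k G) * nm W * nm (row k G) = nm W * (nm (row k G) * nm (row k G)) by ring.
  by apply: ler_wpM2l => //; apply: ler_pM.
have cross : forall k l, `|qf W (row k G) (row l Bx)| <= (nm W * g ^+ 2 / tau + tau * C) / 2.
  move=> k l; have := cs_ineq (row k G) (row l Bx) hs hp t0.
  have := qgg k; have := hC l.
  move=> h1 h2 h3.
  have h4 : qf W (row k G) (row k G) / tau <= nm W * g ^+ 2 / tau.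
    by rewrite ler_pM2r // invr_gt0.
  have h5 : tau * qf W (row l Bx) (row l Bx) <= tau * C by rewrite ler_pM2l.
  lra.
apply: ler_sum => k _.
apply: ler_sum => l _; rewrite !addmx_entry !entry_qf.
apply: le_trans (ler_normD _ _) _; apply: lerD; last first.
  apply: le_trans (qf_nm _ _ _) _.
  have := gk k; have := gk l; have := nm_ge0 (row k G); have := nm_ge0 (row l G);
    have := nm_ge0 W.
  move=> a b c e f; rewrite expr2.
  have -> : nm (row k G) * nm W * nm (row l G) = nm W * (nm (row k G) * nm (row l G)) by ring.
  by apply: ler_wpM2l => //; apply: ler_pM.
apply: le_trans (ler_normD _ _) _.
rewrite (qf_sym _ _ hs).
have := cross l k; have := cross k l; lra.
Qed.
End S.

Section S.
Context {R : realType}.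

Lemma sum_sq_le (k : nat) (a : 'I_k -> R) : (forall i, 0 <= a i) ->
  \sum_i a i ^+ 2 <= (\sum_i a i) ^+ 2.
Proof.
move=> a0; rewrite expr2 mulr_suml; apply: ler_sum => i _.
rewrite expr2; apply: ler_wpM2l => //.
rewrite (bigD1 i) //= lerDl; exact: sumr_ge0.
Qed.

Lemma eucl_le_nm k (w : 'cV[R]_k) : eucl w <= nm w.
Proof.
rewrite /eucl /nm.
have e : \sum_i \sum_(j < 1) `|w i j| = \sum_i `|w i 0| by apply: eq_bigr => i _; rewrite big_ord1.
rewrite e -(@ger0_norm _ (\sum_i `|w i 0|)); last by apply: sumr_ge0.
rewrite -sqrtr_sqr ler_sqrt; last exact: sqr_ge0.
have e2 : \sum_i `|w i 0| ^+ 2 = \sum_i w i 0 ^+ 2.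
  by apply: eq_bigr => i _; rewrite real_normK // num_real.
rewrite -e2; exact: sum_sq_le.
Qed.

Lemma entry_le_eucl k (w : 'cV[R]_k) i : `|w i 0| <= eucl w.
Proof.
rewrite /eucl -sqrtr_sqr ler_sqrt; last by apply: sumr_ge0 => j _; exact: sqr_ge0.
rewrite (bigD1 i) //= lerDl.
by apply: sumr_ge0 => j _; exact: sqr_ge0.
Qed.

Lemma frac_half (x K : R) : 0 <= x -> 0 <= K -> K * (x / (2 * (K + 1))) <= x / 2.
Proof.
move=> x0 K0; have K1 : 0 < 2 * (K + 1) by lra.
rewrite mulrA ler_pdivrMr //.
have -> : x / 2 * (2 * (K + 1)) = x * (K + 1) by field.
nra.
Qed.

Lemma E_small d n ma (Rw : 'M[R]_ma) (M : 'I_ma -> 'M[R]_(2, n))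
  (B : 'I_ma -> 'cV[R]_2 -> R -> 'cV[R]_d) (lN : R -> R) (tf C : R) (xi : R -> 'cV[R]_n) :
  sym_posdef Rw -> {within `[0, +oo[, continuous lN} -> lN 0 = 0 ->
  (forall (i : 'I_ma) (t : R) (x y : 'cV[R]_2), 0 <= t <= tf ->
     eucl (B i x t - B i y t) <= lN (eucl (x - y))) ->
  forall e0, 0 < e0 -> exists2 dl, 0 < dl & forall eta : R -> 'cV[R]_n,
    (forall t, 0 <= t <= tf -> `|xi t - eta t| < dl) ->
    forall tau, 0 <= tau <= tf -> `|BBstar_along Rw B M xi tau| <= C ->
    nm (BBstar_along Rw B M eta tau - BBstar_along Rw B M xi tau) <= e0.
Proof.
move=> hR clN lN0 hB e0 e00.
set W := invmx Rw.
have hs : W^T = W := Wsym hR.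
have hp : forall v, 0 <= qf W v v := Wpsd hR.
set N : R := (d * d)%:R.
have N0 : 0 <= N by rewrite ler0n.
set K1 := N * (`|C| + 1).
have K10 : 0 <= K1 by rewrite mulr_ge0 // addr_ge0.
set tau0 := e0 / (2 * (K1 + 1)).
have t0 : 0 < tau0 by rewrite divr_gt0 //; lra.
set K2 := nm W * (tau0^-1 + 1) * N.
have K20 : 0 <= K2.
  by rewrite mulr_ge0 // mulr_ge0 ?nm_ge0 // addr_ge0 // invr_ge0 ltW.
set g := Num.min 1 (e0 / (2 * (K2 + 1))).
have g0 : 0 < g by rewrite lt_min ltr01 /= divr_gt0 //; lra.
have g1 : g <= 1 by rewrite ge_min lexx.
have g2 : g <= e0 / (2 * (K2 + 1)) by rewrite ge_min lexx orbT.
set gp := g / ((d * ma)%:R + 1).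
have gp0 : 0 < gp by rewrite divr_gt0 // ltr_pwDr // ler0n.
have in0 : `[0, +oo[%classic (0:R) by rewrite /= in_itv /= lexx.
have [rho rho0 Hrho] := @wcont_ed _ _ _ _ clN 0 in0 _ gp0.
set Mb := \sum_i nm (M i).
have Mb0 : 0 <= Mb by apply: sumr_ge0 => i _; exact: nm_ge0.
have pos1 : 0 < Mb + 1 by lra.
have pos2 : 0 < n%:R + 1 :> R by rewrite ltr_pwDr // ler0n.
exists (rho / ((Mb + 1) * (n%:R + 1))); first by rewrite divr_gt0 // mulr_gt0.
move=> eta Heta tau tau0tf hC.
rewrite /BBstar_along -/W.
set Bx := BN_along B M xi tau.
set G := BN_along B M eta tau - Bx.
have -> : BN_along B M eta tau = Bx + G by rewrite /G addrC subrK.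
have hq : forall l, qf W (row l Bx) (row l Bx) <= C.
  move=> l; rewrite -entry_qf; apply: le_trans (ler_norm _) _.
  by apply: le_trans hC; exact: entry_le_mxnorm.
have Gki : forall k i, `|G k i| <= gp.
  move=> k i.
  have h1 := entry_le_eucl (B i (M i *m eta tau) tau - B i (M i *m xi tau) tau) k.
  have h2 := hB i tau (M i *m eta tau) (M i *m xi tau) tau0tf.
  set r := eucl (M i *m eta tau - M i *m xi tau) in h2.
  have r0 : 0 <= r by rewrite /r /eucl sqrtr_ge0.
  have rr : r < rho.
    rewrite /r -mulmxBr; apply: le_lt_trans (eucl_le_nm _) _; apply: le_lt_trans (nmM _ _) _.
    set v := eta tau - xi tau.
    have a1 : nm (M i) <= Mb + 1.
      have : nm (M i) <= Mb by rewrite /Mb (bigD1 i) //= lerDl; apply: sumr_ge0 => j _; exact: nm_ge0.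
      lra.
    have a0 : 0 <= `|v| by [].
    have a2 : nm v <= (n%:R + 1) * `|v|.
      apply: le_trans (nm_le_mxnorm _) _; rewrite muln1 -[X in X <= _]mulr_natr.
      rewrite [X in _ <= X]mulrC; apply: ler_wpM2l => //; by rewrite lerDl.
    have a3 : `|v| < rho / ((Mb + 1) * (n%:R + 1)) by rewrite /v distrC; exact: Heta.
    apply: le_lt_trans (ler_pM (nm_ge0 _) (nm_ge0 _) a1 a2) _.
    have -> : rho = (Mb + 1) * ((n%:R + 1) * (rho / ((Mb + 1) * (n%:R + 1)))).
      by field; apply/andP; split; rewrite gt_eqF.
    by rewrite ltr_pM2l // ltr_pM2l.
  have h3 : lN r < gp.
    have rin : `[0, +oo[%classic r by rewrite /= in_itv /= r0.
    have := Hrho r rin; rewrite sub0r normrN ger0_norm // => /(_ rr).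
    rewrite lN0 sub0r normrN => h; apply: le_lt_trans h; exact: ler_norm.
  rewrite !mxE in h1; rewrite /G !mxE.
  by apply: ltW; apply: le_lt_trans h1 _; apply: le_lt_trans h2 h3.
have hG : nm G <= g.
  apply: (@le_trans _ _ (\sum_(k < d) \sum_(i < ma) gp)).
    by apply: ler_sum => k _; apply: ler_sum => i _; exact: Gki.
  rewrite sumr_const sumr_const !card_ord -mulrnA -[X in X <= _]mulr_natr /gp.
  have dm0 : 0 <= (d * ma)%:R :> R by rewrite ler0n.
  rewrite mulrAC ler_pdivrMr; last by lra.
  rewrite mulnC mulrDr mulr1 lerDl; exact: ltW.
apply: le_trans (Ebound hs hp t0 hq hG) _.
rewrite -mulr_natr -/N.
have e1 : (nm W * g ^+ 2 / tau0 + tau0 * C + nm W * g ^+ 2) * N =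
   g ^+ 2 * K2 + tau0 * (C * N).
  by rewrite /K2; field; rewrite gt_eqF.
rewrite e1.
have h1 : tau0 * (C * N) <= e0 / 2.
  have cn : C * N <= K1.
    by rewrite /K1 [C * N]mulrC; apply: ler_wpM2l => //; have := ler_norm C; lra.
  have := ler_wpM2r (ltW t0) cn; rewrite [C * N * _]mulrC => h; apply: le_trans h _.
  exact: (frac_half (ltW e00) K10).
have h2 : g ^+ 2 * K2 <= e0 / 2.
  apply: le_trans (frac_half (ltW e00) K20); rewrite mulrC; apply: ler_wpM2l => //.
  apply: le_trans g2; rewrite expr2; have := ltW g0; move=> gg; rewrite -[X in _ <= X]mul1r; apply: ler_wpM2r => //.
lra.
Qed.
End S.

Section S.
Context {R : realType}.
Notation mu := (@lebesgue_measure R).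

Lemma mitv (a b : R) : measurable (`[a, b]%classic : set R).
Proof. exact: measurable_itv. Qed.

Lemma mu_itv_fin (a b : R) : (mu `[a, b] < +oo)%E.
Proof. by rewrite lebesgue_measure_itv; case: ifP => _; exact: ltry. Qed.

Lemma fine_mu_itv (a b : R) : a <= b -> fine (mu `[a, b]) = b - a.
Proof.
move=> ab; rewrite lebesgue_measure_itv /= lte_fin; case: ltP => [ab'|ba].
  by rewrite -EFinB.
have -> : a = b by apply/eqP; rewrite eq_le ab ba.
by rewrite subrr.
Qed.

Lemma integrable_rB (D : set R) (f g : R -> R) : measurable D ->
  mu.-integrable D (EFin \o f) -> mu.-integrable D (EFin \o g) ->
  mu.-integrable D (EFin \o (fun x => f x - g x)).
Proof.
move=> mD i1 i2; have := @integrableB _ _ _ mu D mD _ _ i1 i2.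
by apply: (@eq_integrable _ _ _ mu D mD) => x _ /=; rewrite EFinB.
Qed.

Lemma nm3_le m n p q (A : 'M[R]_(m, n)) (B : 'M[R]_(n, p)) (C : 'M[R]_(p, q)) a b c :
  nm A <= a -> nm B <= b -> nm C <= c -> nm (A *m B *m C) <= a * b * c.
Proof.
move=> ha hb hc; apply: le_trans (nmM3 _ _ _) _.
apply: ler_pM => //; [apply: mulr_ge0; exact: nm_ge0 | exact: nm_ge0 |].
by apply: ler_pM => //; exact: nm_ge0.
Qed.

Lemma shift_cont d (tf t : R) (S : R -> 'M[R]_d) : 0 <= t ->
  {within `[0, tf], continuous S} -> {within `[t, tf], continuous (fun x => S (x - t))}.
Proof.
move=> t0 /wcont_ed cS; apply: ed_wcont => x.
rewrite /= in_itv /= => /andP[tx xtf] e e0.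
have x0 : `[0, tf]%classic (x - t) by rewrite /= in_itv /=; apply/andP; split; lra.
have [dl dl0 H] := cS _ x0 e e0; exists dl => // y.
rewrite /= in_itv /= => /andP[ty ytf] xy; apply: H.
  by rewrite /= in_itv /=; apply/andP; split; lra.
by have -> : x - t - (y - t) = x - y by ring.
Qed.

Lemma submx_entry m n (A B : 'M[R]_(m, n)) i j : (A - B) i j = A i j - B i j.
Proof. by rewrite !mxE. Qed.

Lemma IF d (tf : R) (S Q Pi' BB : R -> 'M[R]_d) (t : R) :
  0 <= t -> t <= tf ->
  {within `[0, tf], continuous S} ->
  (forall i j, mu.-integrable `[0, tf] (EFin \o (fun tau => Q tau i j))) ->
  {within `[0, tf], continuous Pi'} ->
  mxm `[0, tf] BB -> (exists C, {ae mu, forall tau, 0 <= tau <= tf -> `|BB tau| <= C}) ->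
  forall i j, mu.-integrable `[t, tf] (EFin \o (fun tau =>
     ((S (tau - t))^T *m (Q tau - Pi' tau *m BB tau *m Pi' tau) *m S (tau - t)) i j)).
Proof.
move=> t0 ttf cS iQ cP mBB [C hC] i j.
have tf0 : 0 <= tf by lra.
have [Sb hSb] := wcont_bound tf0 (wcont_nm cS).
have [Pb hPb] := wcont_bound tf0 (wcont_nm cP).
have Sb0 : 0 <= Sb by apply: le_trans (nm_ge0 (S 0)) (hSb 0 _); rewrite lexx tf0.
have Pb0 : 0 <= Pb by apply: le_trans (nm_ge0 (Pi' 0)) (hPb 0 _); rewrite lexx tf0.
set St := fun tau => S (tau - t).
have cSt : {within `[t, tf], continuous St} := shift_cont t0 cS.
have mSt : mxm `[t, tf] St := mxm_cont cSt.
have bSt : forall tau, t <= tau <= tf -> nm (St tau) <= Sb.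
  by move=> tau /andP[h1 h2]; apply: hSb; apply/andP; split; lra.
have mP : mxm `[t, tf] Pi' := mxm_sub t0 (lexx _) (mxm_cont cP).
have mB : mxm `[t, tf] BB := mxm_sub t0 (lexx _) mBB.
have mD := mitv t tf.
have e : (fun tau => ((St tau)^T *m (Q tau - Pi' tau *m BB tau *m Pi' tau) *m St tau) i j)
   = (fun tau => ((St tau)^T *m Q tau *m St tau) i j
        - ((St tau)^T *m (Pi' tau *m BB tau *m Pi' tau) *m St tau) i j).
  by apply/funext => tau; rewrite mulmxBr mulmxBl submx_entry.
rewrite -/St e; apply: integrable_rB => //.
  rewrite (_ : (fun tau => _) = fun tau => \sum_k (\sum_l Q tau l k * St tau l i) * St tau k j); last first.
    apply/funext => tau; rewrite mxE; apply: eq_bigr => k _; congr (_ * _).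
    by rewrite mxE; apply: eq_bigr => l _; rewrite mxE mulrC.
  apply: integrable_rsum => // k.
  apply: (@integrable_rMl _ _ _ _ Sb); [exact: mD| |exact: mSt|]; last first.
    move=> x; rewrite /= in_itv /= => hx; apply: le_trans (entry_le_nm (St x) k j) (bSt _ hx).
  apply: integrable_rsum => // l.
  apply: (@integrable_rMl _ _ _ _ Sb); [exact: mD| |exact: mSt|]; last first.
    move=> x; rewrite /= in_itv /= => hx; apply: le_trans (entry_le_nm (St x) l i) (bSt _ hx).
  apply: (@integrableS _ _ _ mu `[0, tf]); [exact: mitv|exact: mitv| |exact: iQ].
  move=> x; rewrite /= !in_itv /= => /andP[h1 h2]; apply/andP; split; lra.
apply: (@ae_bdd_integrable _ _ _ (Sb * (Pb * (`|C| *+ (d * d)) * Pb) * Sb)) => //.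
- exact: mu_itv_fin.
- exact: (mxm_mul (mxm_mul (mxm_tr mSt) (mxm_mul (mxm_mul mP mB) mP)) mSt).
- have h : 0 <= `|C| *+ (d * d) by apply: mulrn_wge0.
  by rewrite !mulr_ge0.
move: hC; apply: (filterS (Filter := aeF)) => x hx.
rewrite /= in_itv /= => /andP[tx xtf].
have xb : t <= x <= tf by rewrite tx xtf.
have x0 : 0 <= x <= tf by apply/andP; split; lra.
apply: le_trans (entry_le_nm _ _ _) _.
apply: nm3_le; [by rewrite nm_tr; exact: bSt | | exact: bSt].
apply: nm3_le; [exact: hPb | | exact: hPb].
apply: le_trans (nm_le_mxnorm _) _; rewrite -[X in X <= _]mulr_natr -[X in _ <= X]mulr_natr; apply: ler_wpM2r; first exact: ler0n.
exact: le_trans (hx x0) (ler_norm C).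
Qed.
End S.

Section S.
Context {R : realType}.
Notation mu := (@lebesgue_measure R).

Definition ind (s u : R) : R -> R := \1_(`[s, u]%classic : set R).

Lemma ind_integrable (s u t tf : R) : mu.-integrable `[t, tf] (EFin \o ind s u).
Proof.
apply: (@integrableS _ _ _ mu setT); [by []|exact: mitv|by []|exact: integrable_indic_itv].
Qed.

Lemma Rint_ind_le (s u t tf : R) : s <= u -> \int[mu]_(x in `[t, tf]) ind s u x <= u - s.
Proof.
move=> su; rewrite /Rintegral /ind integral_indic; try exact: mitv.
rewrite -(fine_mu_itv su); apply: fine_le.
- rewrite ge0_fin_numE ?measure_ge0 //; apply: le_lt_trans (mu_itv_fin s u).
  by apply: measureIl; exact: mitv.
- by rewrite ge0_fin_numE ?measure_ge0 // mu_itv_fin.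
- by apply: measureIl; exact: mitv.
Qed.

Lemma integrable_rD (D : set R) (f g : R -> R) : measurable D ->
  mu.-integrable D (EFin \o f) -> mu.-integrable D (EFin \o g) ->
  mu.-integrable D (EFin \o (fun x => f x + g x)).
Proof.
move=> mD i1 i2; have := @integrableD _ _ _ mu D mD _ _ i1 i2.
by apply: (@eq_integrable _ _ _ mu D mD) => x _ /=; rewrite EFinD.
Qed.

Lemma cst_integrable (a b c : R) : mu.-integrable `[a, b] (EFin \o (fun _ => c)).
Proof.
apply: (@ae_bdd_integrable _ `[a, b] (fun _ => c) `|c|);
  [exact: mitv|exact: mu_itv_fin|exact: measurable_cst|by []|].
by apply: aeW => x _.
Qed.

Lemma zm2 (V : zmodType) (a b c : V) : (a + b) - (a + c) = b - c.
Proof. by rewrite opprD addrACA subrr add0r. Qed.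

Lemma prod_mono (s pe px dd bx e Sb P Cb eta : R) :
  0 <= s -> s <= Sb -> 0 <= pe -> pe <= P + 1 -> 0 <= px -> px <= P -> 0 <= dd ->
  0 <= bx -> bx <= Cb -> 0 <= e -> e <= eta ->
  s * s * (pe * pe * e + dd * bx * (pe + px)) <=
  Sb * Sb * ((P + 1) * (P + 1) * eta + dd * (Cb * (2 * P + 1))).
Proof.
move=> s0 sS pe0 peP px0 pxP dd0 bx0 bxC e0 eE.
apply: ler_pM; [by rewrite mulr_ge0|
  by apply: addr_ge0; rewrite !mulr_ge0 // addr_ge0 |
  by apply: ler_pM|].
apply: lerD.
  apply: ler_pM => //; [by rewrite mulr_ge0| by apply: ler_pM].
rewrite -mulrA; apply: ler_wpM2l => //; apply: ler_pM => //; first by rewrite addr_ge0.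
lra.
Qed.

Lemma hypB_riccati d (tf : R) (S Q : R -> 'M[R]_d) (Qf : 'M[R]_d) (Px Pe Bx Be : R -> 'M[R]_d)
  (Sb P Cb eta : R) :
  0 < tf ->
  {within `[0, tf], continuous S} ->
  (forall i j, mu.-integrable `[0, tf] (EFin \o (fun tau => Q tau i j))) ->
  {within `[0, tf], continuous Px} -> {within `[0, tf], continuous Pe} ->
  mxm `[0, tf] Bx -> mxm `[0, tf] Be ->
  (exists C, {ae mu, forall tau, 0 <= tau <= tf -> `|Bx tau| <= C}) ->
  (exists C, {ae mu, forall tau, 0 <= tau <= tf -> `|Be tau| <= C}) ->
  riccati_solution tf S Qf Q Bx Px -> riccati_solution tf S Qf Q Be Pe ->
  (forall s, 0 <= s <= tf -> nm (S s) <= Sb) ->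
  (forall t, 0 <= t <= tf -> nm (Px t) <= P) ->
  0 <= Sb -> 0 <= P -> 0 <= Cb -> 0 <= eta ->
  {ae mu, forall tau, 0 <= tau <= tf -> nm (Bx tau) <= Cb} ->
  {ae mu, forall tau, 0 <= tau <= tf -> nm (Be tau - Bx tau) <= eta} ->
  HypB (fun t => nm (Px t - Pe t)) tf
     (((d * d)%:R * (Sb * Sb * ((P + 1) * (P + 1))) * tf + 1) * eta)
     ((d * d)%:R * (Sb * Sb * (Cb * (2 * P + 1)))).
Proof.
move=> tf0 cS iQ cPx cPe mBx mBe bBx bBe [_ Rx] [_ Re] hSb hP Sb0 P0 Cb0 e0 aBx aE.
move=> s u m M s0 su utf m0 mM M1 hM hm t /andP[st ttf].
have t0 : 0 <= t by lra.
set N : R := (d * d)%:R.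
have N0 : 0 <= N by rewrite ler0n.
set k1 := Sb * Sb * ((P + 1) * (P + 1)).
set a0 := k1 * eta.
set b0 := Sb * Sb * (Cb * (2 * P + 1)).
have k10 : 0 <= k1 by rewrite /k1 !mulr_ge0 // addr_ge0.
have a00 : 0 <= a0 by rewrite mulr_ge0.
have b00 : 0 <= b0 by rewrite /b0 !mulr_ge0 // addr_ge0 // mulr_ge0.
set c1 := a0 + b0 * m.
set c2 := b0 * (M - m).
set k := fun tau => c1 + ind s u tau * c2.
have mD := mitv t tf.
have ik : mu.-integrable `[t, tf] (EFin \o k).
  apply: integrable_rD => //; first exact: cst_integrable.
  apply: (@integrable_rMl _ _ _ _ `|c2|);
    [exact: mD|exact: ind_integrable|exact: measurable_cst|by move=> x _].
have Ik : \int[mu]_(x in `[t, tf]) k x <= c1 * (tf - t) + (u - s) * c2.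
  rewrite RintegralD //; [|exact: cst_integrable|].
    rewrite Rintegral_cst // fine_mu_itv // [c1 * _]mulrC RintegralZr //; last exact: ind_integrable.
    apply: lerD; first by rewrite mulrC.
    apply: ler_wpM2r; first by rewrite /c2 mulr_ge0 // subr_ge0.
    exact: Rint_ind_le.
  apply: (@integrable_rMl _ _ _ _ `|c2|);
    [exact: mD|exact: ind_integrable|exact: measurable_cst|by move=> x _].
have t0tf : 0 <= t <= tf by rewrite t0 ttf.
have iFx := IF t0 ttf cS iQ cPx mBx bBx.
have iFe := IF t0 ttf cS iQ cPe mBe bBe.
have entry : forall i j, `|(Px t - Pe t) i j| <= \int[mu]_(x in `[t, tf]) k x.
  move=> i j.
  rewrite (Rx t t0tf) (Re t t0tf) zm2 submx_entry /mx_integral !mxE -RintegralB //.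
  apply: ae_Rint_bound => //; first exact: integrable_rB.
    move=> x _; rewrite /k /c1 /c2 /ind indicE.
    apply: addr_ge0; first by rewrite addr_ge0 // mulr_ge0.
    by rewrite mulr_ge0 // ?ler0n // mulr_ge0 // subr_ge0.
  have pw : forall tau : R, (0 <= tau <= tf -> nm (Bx tau) <= Cb) ->
      (0 <= tau <= tf -> nm (Be tau - Bx tau) <= eta) -> t <= tau <= tf ->
      `|((S (tau - t))^T *m (Q tau - Px tau *m Bx tau *m Px tau) *m S (tau - t)) i j -
        ((S (tau - t))^T *m (Q tau - Pe tau *m Be tau *m Pe tau) *m S (tau - t)) i j| <= k tau.
    move=> tau hb he /andP[ttau tautf].
    have tau0 : 0 <= tau <= tf by apply/andP; split; lra.
    have := hb tau0; have := he tau0 => {hb he} he hb.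
    rewrite -submx_entry; apply: le_trans (entry_le_nm _ _ _) _.
    apply: le_trans (pw_bound _ _ _ _ _ _) _.
    set dd := nm (Px tau - Pe tau).
    have ddM : dd <= M by apply: hM; apply/andP; split; lra.
    have dd0 : 0 <= dd := nm_ge0 _.
    have eD : nm (Pe tau - Px tau) = dd by rewrite /dd -nmN opprB.
    rewrite eD.
    have hpe : nm (Pe tau) <= P + 1.
      have -> : Pe tau = Px tau - (Px tau - Pe tau) by rewrite opprB addrC subrK.
      apply: le_trans (nmB _ _) _; rewrite -/dd; have := hP tau tau0; lra.
    have hS : nm (S (tau - t)) <= Sb by apply: hSb; apply/andP; split; lra.
    apply: le_trans (prod_mono (nm_ge0 _) hS (nm_ge0 _) hpe (nm_ge0 _) (hP tau tau0) dd0
       (nm_ge0 _) hb (nm_ge0 _) he) _.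
    have e1 : Sb * Sb * ((P + 1) * (P + 1) * eta + dd * (Cb * (2 * P + 1))) = a0 + b0 * dd.
      by rewrite /a0 /b0 /k1; ring.
    rewrite e1 /k /c1 /c2 -addrA lerD2l.
    have -> : b0 * m + ind s u tau * (b0 * (M - m)) = b0 * (m + ind s u tau * (M - m)) by ring.
    apply: ler_wpM2l => //.
    rewrite /ind indicE; have [tu|ut] := leP tau u.
      have -> : tau \in (`[s, u]%classic : set R).
        by apply/mem_set; rewrite /= in_itv /=; apply/andP; split; lra.
      by rewrite mul1r addrC subrK.
    have -> : tau \in (`[s, u]%classic : set R) = false.
      apply/negbTE/negP => /set_mem; rewrite /= in_itv /= => /andP[_ h]; lra.
    rewrite mul0r addr0; apply: hm; apply/andP; split; lra.
  apply: (filterS2 aeF _ aBx aE) => tau hb he.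
  rewrite /= in_itv /= => h; exact: pw.
have hsum : nm (Px t - Pe t) <= N * \int[mu]_(x in `[t, tf]) k x.
  rewrite /nm; apply: (@le_trans _ _ (\sum_(i < d) \sum_(j < d) \int[mu]_(x in `[t, tf]) k x)).
    by apply: ler_sum => i _; apply: ler_sum => j _; exact: entry.
  rewrite sumr_const sumr_const !card_ord -mulrnA -[X in X <= _]mulr_natr mulrC.
  by rewrite /N.
apply: le_trans hsum _; apply: le_trans (ler_wpM2l N0 Ik) _.
have h1 : c1 * (tf - t) <= c1 * tf.
  by apply: ler_wpM2l; [rewrite /c1 addr_ge0 // mulr_ge0 | lra].
have h2 : (u - s) * c2 <= (u - s) * (b0 * M).
  by apply: ler_wpM2l; [lra | rewrite /c2; apply: ler_wpM2l => //; lra].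
have e3 : N * (c1 * tf + (u - s) * (b0 * M)) + eta =
   (N * k1 * tf + 1) * eta + N * b0 * ((u - s) * M + tf * m).
  by rewrite /c1 /a0; ring.
apply: (@le_trans _ _ (N * (c1 * tf + (u - s) * (b0 * M)))).
  by apply: ler_wpM2l => //; apply: lerD.
rewrite -e3 lerDl //.
Qed.
End S.

Section S.
Context {R : realType}.
Notation mu := (@lebesgue_measure R).

Lemma mx_integral_pt d (a : R) (F : R -> 'M[R]_d) : mx_integral a a F = 0.
Proof.
apply/matrixP => i j; rewrite !mxE /Rintegral set_itv1 integral_set1 //.
Qed.

Lemma wcont_sub m n (A : set R) (F G : R -> 'M[R]_(m, n)) :
  {within A, continuous F} -> {within A, continuous G} ->
  {within A, continuous (fun t => F t - G t)}.
Proof.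
move=> /wcont_ed cF /wcont_ed cG; apply: ed_wcont => x Ax e e0.
have e2 : 0 < e / 2 by rewrite divr_gt0.
have [d1 d10 H1] := cF x Ax _ e2; have [d2 d20 H2] := cG x Ax _ e2.
exists (Num.min d1 d2); first by rewrite lt_min d10 d20.
move=> y Ay; rewrite lt_min => /andP[y1 y2].
have -> : F x - G x - (F y - G y) = (F x - F y) - (G x - G y).
  by rewrite !opprB addrACA [in RHS]addrACA [- G x + _]addrC.
apply: le_lt_trans (ler_normB _ _) _.
have := H1 y Ay y1; have := H2 y Ay y2; lra.
Qed.

Lemma wcont_ED (a b : R) (f : R -> R) : {within `[a, b], continuous f} -> ED a b f.
Proof.
move=> /wcont_ed cf x hx e e0.
have [dl dl0 H] := cf x (ltac:(by rewrite /= in_itv /=)) e e0.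
exists dl => // y hy; apply: H; by rewrite /= in_itv /=.
Qed.
End S.

Unset Implicit Arguments.
Theorem lemma5 (R : realType) (d n ma : nat) (tf : R)
  (S : R -> 'M[R]_d) (Qf : 'M[R]_d) (Q : R -> 'M[R]_d) (Rw : 'M[R]_ma)
  (M : 'I_ma -> 'M[R]_(2, n)) (B : 'I_ma -> 'cV[R]_2 -> R -> 'cV[R]_d)
  (lN : R -> R) (z0 : 'cV[R]_d) (Pi : (R -> 'cV[R]_n) -> R -> 'M[R]_d) :
  0 < tf ->
  (* S_N = P_N S(.) P_N restricted to H_N: strongly continuous, S_N(0) = id *)
  S 0 = 1%:M -> {within `[0, tf], continuous S} ->
  (* (A5) *) sym_nonneg Qf ->
  (* (A6) *) L1_nonneg_on tf Q ->
  sym_posdef Rw ->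
  (* (A7), along every continuous actuator trajectory *)
  (forall xi : R -> 'cV[R]_n, {within `[0, tf], continuous xi} ->
     Linf_nonneg_on tf (BBstar_along Rw B M xi)) ->
  (* continuity of the approximated input operator w.r.t. location *)
  {within `[0, +oo[, continuous lN} -> lN 0 = 0 ->
  (forall r, 0 <= r -> 0 <= lN r) ->
  (forall (i : 'I_ma) (t : R) (x y : 'cV[R]_2), 0 <= t <= tf ->
     eucl (B i x t - B i y t) <= lN (eucl (x - y))) ->
  (* Pi xi solves the approximate Riccati equation with B_N(M xi(.), .) *)
  (forall xi : R -> 'cV[R]_n, {within `[0, tf], continuous xi} ->
     riccati_solution tf S Qf Q (BBstar_along Rw B M xi) (Pi xi)) ->
  (* K_N is continuous on C([0,tf]; R^n) with the sup norm *)
  forall xi : R -> 'cV[R]_n, {within `[0, tf], continuous xi} ->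
  forall eps : R, 0 < eps ->
  exists2 delta : R, 0 < delta &
    forall eta : R -> 'cV[R]_n, {within `[0, tf], continuous eta} ->
      (forall t, 0 <= t <= tf -> `|xi t - eta t| < delta) ->
      `|K_N Pi z0 xi - K_N Pi z0 eta| < eps.
Proof.
move=> tf0 S0 cS Qfpsd [iQ _] hR A7 clN lN0 lNpos hB Ric xi cxi eps eps0.
have tf0' : 0 <= tf by exact: ltW.
have Rx := Ric xi cxi.
have [mBx [[Cx hCx] _]] := A7 xi cxi.
have [Sb hSb] := wcont_bound tf0' (wcont_nm cS).
have [P hP] := wcont_bound tf0' (wcont_nm (proj1 Rx)).
have in0 : (0:R) <= 0 <= tf by rewrite lexx tf0'.
have Sb0 : 0 <= Sb by apply: le_trans (nm_ge0 (S 0)) (hSb 0 in0).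
have P0 : 0 <= P by apply: le_trans (nm_ge0 (Pi xi 0)) (hP 0 in0).
set Cb := `|Cx| *+ (d * d).
have Cb0 : 0 <= Cb by apply: mulrn_wge0.
have aBx : {ae (@lebesgue_measure R), forall tau, 0 <= tau <= tf -> nm (BBstar_along Rw B M xi tau) <= Cb}.
  move: hCx; apply: (filterS (Filter := aeF)) => tau h htau.
  apply: le_trans (nm_le_mxnorm _) _.
  rewrite /Cb -[X in X <= _]mulr_natr -[X in _ <= X]mulr_natr; apply: ler_wpM2r; first exact: ler0n.
  exact: le_trans (h htau) (ler_norm Cx).
set N : R := (d * d)%:R.
have N0 : 0 <= N by rewrite ler0n.
set k1 := Sb * Sb * ((P + 1) * (P + 1)).
have k10 : 0 <= k1 by rewrite /k1 !mulr_ge0 // addr_ge0.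
set beta := N * (Sb * Sb * (Cb * (2 * P + 1))).
have beta0 : 0 <= beta by rewrite /beta !mulr_ge0 // addr_ge0 // mulr_ge0.
set K := (Num.trunc (4 * beta * tf)).+1.
have K0 : (0 < K)%N by [].
have hK : beta * (tf / K%:R) <= 1/4.
  have h := truncnS_gt (4 * beta * tf); rewrite -/K in h.
  have Kp : 0 < K%:R :> R by rewrite ltr0n.
  rewrite mulrA ler_pdivrMr //; lra.
set c := beta * tf + 1.
set gK := gs c K.
have gK0 : 0 <= gK by apply: gs_ge0; rewrite /c addr_ge0 // mulr_ge0.
set nz := nm z0^T * nm z0.
have nz0 : 0 <= nz by rewrite mulr_ge0 // nm_ge0.
set A0 := Num.min 1 (eps / (nz + 1)).
have A00 : 0 < A0 by rewrite lt_min ltr01 /= divr_gt0 //; lra.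
have A01 : A0 <= 1 by rewrite ge_min lexx.
have A02 : A0 <= eps / (nz + 1) by rewrite ge_min lexx orbT.
have L0 : 0 < (N * k1 * tf + 1) * (gK + 1).
  apply: mulr_gt0; last lra.
  have : 0 <= N * k1 * tf by apply: mulr_ge0 => //; apply: mulr_ge0.
  lra.
set eta := A0 / ((N * k1 * tf + 1) * (gK + 1)).
have eta0 : 0 < eta by rewrite divr_gt0.
have [dl dl0 Hdl] := E_small M Cx xi hR clN lN0 hB eta0.
exists dl => // eta_ ceta close.
have Re := Ric eta_ ceta.
have [mBe [[Ce hCe] _]] := A7 eta_ ceta.
have aE : {ae (@lebesgue_measure R), forall tau, 0 <= tau <= tf ->
    nm (BBstar_along Rw B M eta_ tau - BBstar_along Rw B M xi tau) <= eta}.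
  move: hCx; apply: (filterS (Filter := aeF)) => tau h htau.
  exact: Hdl eta_ close tau htau (h htau).
have HB := hypB_riccati tf0 cS iQ (proj1 Rx) (proj1 Re) mBx mBe (ex_intro _ Cx hCx)
  (ex_intro _ Ce hCe) Rx Re hSb hP Sb0 P0 Cb0 (ltW eta0) aBx aE.
set f := fun t => nm (Pi xi t - Pi eta_ t).
have cf : ED 0 tf f by apply: wcont_ED; apply: wcont_nm; apply: wcont_sub; [exact: proj1 Rx | exact: proj1 Re].
have ftf : f tf <= 0.
  have tfin : 0 <= tf <= tf by rewrite tf0' lexx.
  rewrite /f (proj2 Rx tf tfin) (proj2 Re tf tfin) !mx_integral_pt subrr.
  rewrite /nm big1 // => i _; rewrite big1 // => j _; by rewrite mxE normr0.
set A := (N * k1 * tf + 1) * eta.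
have Nk : 0 <= N * k1 * tf by apply: mulr_ge0 => //; apply: mulr_ge0.
have Apos : 0 < A by rewrite /A mulr_gt0 //; lra.
have eA : A = A0 / (gK + 1).
  rewrite /A /eta; field; apply/andP; split; rewrite gt_eqF //; lra.
have AgKA0 : A * gK <= A0.
  rewrite eA mulrAC ler_pdivrMr; last lra.
  by apply: ler_wpM2l; [exact: ltW | rewrite lerDl].
have AgK : A * gK <= 1 by apply: le_trans AgKA0 A01.
have hb := bootstrap tf0 Apos beta0 K0 hK cf ftf HB AgK in0.
rewrite /K_N -submx_entry -mulmxBl -mulmxBr.
apply: le_lt_trans (entry_le_nm _ _ _) _; apply: le_lt_trans (nmM3 _ _ _) _.
have f0 : f 0 <= eps / (nz + 1) by apply: le_trans hb _; apply: le_trans AgKA0 A02.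
have -> : nm z0^T * nm (Pi xi 0 - Pi eta_ 0) * nm z0 = nz * f 0 by rewrite /nz /f; ring.
apply: le_lt_trans (ler_wpM2l nz0 f0) _.
rewrite mulrA ltr_pdivrMr; last lra.
nra.
Qed.
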